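(* Let $A\subseteq\mathbb{N}$ be a sum-dominant set with $|A|=6$. Then $A-A$ contains at most $8$ distinct positive elements.
   Context: For a finite set $A\subseteq\mathbb{N}$, the sum set is $A+A=\{a_i+a_j : a_i,a_j\in A\}$ and the difference set is $A-A=\{a_i-a_j : a_i,a_j\in A\}$. The set $A$ is called sum-dominant if $|A+A|>|A-A|$. *)

(* Defs.v *)
From HB Require Import structures.
From mathcomp Require Import all_boot all_order all_algebra.
From mathcomp Require Import finmap.
Set Implicit Arguments. Unset Strict Implicit. Unset Printing Implicit Defensive.
Import Order.TTheory GRing.Theory Num.Theory.
Local Open Scope fset_scope.

Definition sumset (A : {fset nat}) : {fset nat} :=
  [fset (a + b)%N | a in A, b in A].

Definition diffset (A : {fset nat}) : {fset int} :=
  [fset ((a%:Z) - (b%:Z))%R | a in A, b in A].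

Definition sum_dominant (A : {fset nat}) : Prop :=
  (#|` diffset A| < #|` sumset A|)%N.

(* Main.v *)
Require Import Defs.
From HB Require Import structures.
From mathcomp Require Import all_boot all_order all_algebra.
From mathcomp Require Import finmap.
From mathcomp Require Import zify.
From Stdlib Require Import Classical.
Import Order.TTheory GRing.Theory Num.Theory.

Module Aux.
Set Implicit Arguments. Unset Strict Implicit.

Lemma rm2 (T U : eqType) (f : T -> U) (s : seq T) u v u' v' :
  uniq s -> u \in s -> v \in s -> u != v -> u' \in s -> v' \in s ->
  u' \notin [:: u; v] -> v' \notin [:: u; v] -> f u' = f u -> f v' = f v ->
  (size (undup (map f s)) <= size s - 2)%N.
Proof.
move=> us us_ vs uv u's v's u'n v'n fu fv.
set s' := [seq x <- s | x \notin [:: u; v]].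
have Hs' : size s' = (size s - 2)%N.
  have := count_predC (mem [:: u; v]) s.
  rewrite size_filter.
  have -> : count (mem [:: u; v]) s = 2.
    rewrite (eq_count (a2 := predU (pred1 u) (pred1 v))); last first.
      by move=> x; rewrite !inE.
    have := count_predUI (pred1 u) (pred1 v) s.
    rewrite (eq_count (a1 := predI _ _) (a2 := pred0)); last first.
      by move=> x /=; apply/andP => -[/eqP -> /eqP E]; move/eqP: uv; apply.
    by rewrite count_pred0 addn0 !count_uniq_mem // us_ vs.
  rewrite /s' /=.  move=> <-. by rewrite addKn.
rewrite -Hs' -(size_map f s').
apply: uniq_leq_size; first exact: undup_uniq.
move=> y; rewrite mem_undup => /mapP [x xs ->].
case: (boolP (x \in [:: u; v])) => xin; last by apply: map_f; rewrite mem_filter xin.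
move: xin; rewrite !inE => /orP [] /eqP ->.
  by rewrite -fu; apply: map_f; rewrite mem_filter u'n.
by rewrite -fv; apply: map_f; rewrite mem_filter v'n.
Qed.

Ltac nin := rewrite ?inE ?negb_or; try (apply/andP; split); try done; rewrite eq_sym; done.

Lemma two_coll (T U : eqType) (f : T -> U) (s : seq T) P Q R S :
  uniq s -> P \in s -> Q \in s -> R \in s -> S \in s -> P != Q -> R != S ->
  f P = f Q -> f R = f S -> ~ (P = R /\ Q = S) -> ~ (P = S /\ Q = R) ->
  (size (undup (map f s)) <= size s - 2)%N.
Proof.
move=> us Ps Qs Rs Ss PQ RS fPQ fRS n1 n2.
case: (eqVneq P R) => [ePR|nPR].
  subst R. case: (eqVneq Q S) => [eQS|nQS]; first by subst; case: n1.
  apply: (rm2 (u := Q) (v := S) (u' := P) (v' := P)) => //; try nin.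
case: (eqVneq P S) => [ePS|nPS].
  subst S. case: (eqVneq Q R) => [eQR|nQR]; first by subst; case: n2.
  apply: (rm2 (u := Q) (v := R) (u' := P) (v' := P)) => //; try nin; try by rewrite ?fPQ ?fRS.
case: (eqVneq Q R) => [eQR|nQR].
  subst R.
  apply: (rm2 (u := Q) (v := S) (u' := P) (v' := P)) => //; try nin; try by rewrite ?fPQ ?fRS.
case: (eqVneq Q S) => [eQS|nQS].
  subst S.
  apply: (rm2 (u := Q) (v := R) (u' := P) (v' := P)) => //; try nin; try by rewrite ?fPQ ?fRS.
apply: (rm2 (u := Q) (v := S) (u' := P) (v' := R)) => //; try nin.
Qed.

Definition idx := iota 0 6.
Definition Ple : seq (nat * nat) := [seq p <- [seq (i, j) | i <- idx, j <- idx] | (p.1 <= p.2)%N].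
Definition Off : seq (nat * nat) := [seq p <- [seq (i, j) | i <- idx, j <- idx] | p.1 != p.2].
Definition sv (a : nat -> nat) (p : nat * nat) : nat := (a p.1 + a p.2)%N.
Definition dv (a : nat -> nat) (p : nat * nat) : int := ((a p.1)%:Z - (a p.2)%:Z)%R.
Definition srt (p : nat * nat) := if (p.1 <= p.2)%N then p else (p.2, p.1).

Lemma size_Ple : size Ple = 21. Proof. by []. Qed.
Lemma size_Off : size Off = 30. Proof. by []. Qed.
Lemma uniq_Ple : uniq Ple. Proof. by []. Qed.
Lemma uniq_Off : uniq Off. Proof. by []. Qed.

Lemma mem_Ple i j : (i < 6)%N -> (j < 6)%N -> (i <= j)%N -> (i, j) \in Ple.
Proof.
move=> hi hj hij; rewrite mem_filter; apply/andP; split => //.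
by apply/allpairsP; exists (i, j); rewrite !mem_iota.
Qed.

Lemma mem_Off i j : (i < 6)%N -> (j < 6)%N -> i != j -> (i, j) \in Off.
Proof.
move=> hi hj hij; rewrite mem_filter; apply/andP; split => //.
by apply/allpairsP; exists (i, j); rewrite !mem_iota.
Qed.

Lemma Off_mem x : x \in Off -> [/\ (x.1 < 6)%N, (x.2 < 6)%N & x.1 != x.2].
Proof.
rewrite mem_filter => /andP [hne /allpairsP [[i j] [hi hj E]]].
rewrite E /= in hne *.
by move: hi hj; rewrite !mem_iota /= !add0n => hi hj.
Qed.

Lemma srt_Ple i j : (i < 6)%N -> (j < 6)%N -> srt (i, j) \in Ple.
Proof.
rewrite /srt /= => hi hj; case: ifP => h; first exact: mem_Ple.
by apply: mem_Ple => //; lia.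
Qed.

Lemma sv_srt a p : sv a (srt p) = sv a p.
Proof. by rewrite /srt /sv; case: ifP => //= _; rewrite addnC. Qed.

Lemma srt_eq i l j k : srt (i, l) = srt (j, k) -> (i = j /\ l = k) \/ (i = k /\ l = j).
Proof.
rewrite /srt /=; do 2 case: ifP => _; case=> -> ->; tauto.
Qed.

Lemma srt_mem i l : i \in [:: (srt (i, l)).1; (srt (i, l)).2] /\ l \in [:: (srt (i, l)).1; (srt (i, l)).2].
Proof. by rewrite /srt /=; case: ifP => _ /=; rewrite !inE !eqxx ?orbT. Qed.

Lemma keyB (a : nat -> nat) (P0 Q0 : nat * nat) :
  (forall R S, R \in Ple -> S \in Ple -> R != S -> sv a R = sv a S ->
     (P0 = R /\ Q0 = S) \/ (P0 = S /\ Q0 = R)) ->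
  (22 <= size (undup (map (dv a) Off)))%N.
Proof.
move=> H.
set Coll := [seq (u, w) | u <- [:: P0.1; P0.2], w <- [:: Q0.1; Q0.2]] ++
            [seq (u, w) | u <- [:: Q0.1; Q0.2], w <- [:: P0.1; P0.2]].
set U := [seq x <- Off | x \notin Coll].
have sU : (22 <= size U)%N.
  have := count_predC (mem Coll) Off.
  rewrite size_Off.
  have : (count (mem Coll) Off <= 8)%N.
    rewrite -size_filter.
    have -> : 8 = size Coll by [].
    apply: uniq_leq_size; first by rewrite filter_uniq // uniq_Off.
    by move=> x; rewrite mem_filter => /andP [].
  rewrite /U size_filter.
  move=> h1 h2.
  have -> : count (fun x => x \notin Coll) Off = count (predC (mem Coll)) Off by [].
  lia.
have injU : {in U &, injective (dv a)}.
  move=> [i j] [k l]; rewrite !(mem_filter _ _ Off) => /andP [xC xO] /andP [yC yO] E.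
  apply/eqP; apply/negPn/negP => nxy.
  have [hi hj hij] := Off_mem xO.
  have [hk hl hkl] := Off_mem yO.
  rewrite /= in hi hj hij hk hl hkl.
  have E' : (a i + a l = a j + a k)%N.
    clear -E; move: E; rewrite /dv /=; lia.
  have RS : srt (i, l) != srt (j, k).
    apply/negP => /eqP /srt_eq [] [e1 e2].
      by move/eqP: hij; apply.
    by move/eqP: nxy; apply; rewrite e1 e2.
  have svE : sv a (srt (i, l)) = sv a (srt (j, k)) by rewrite !sv_srt.
  have [mi ml] := srt_mem i l.
  have [mj mk] := srt_mem j k.
  move/negP: xC; apply.
  case: (H _ _ (srt_Ple hi hl) (srt_Ple hj hk) RS svE) => [[e1 e2]|[e1 e2]].
    by rewrite mem_cat; apply/orP; left; apply: (allpairs_f pair); rewrite ?e1 ?e2.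
  by rewrite mem_cat; apply/orP; right; apply: (allpairs_f pair); rewrite ?e1 ?e2.
apply: (leq_trans sU).
rewrite -(size_map (dv a) U).
apply: uniq_leq_size.
  by rewrite map_inj_in_uniq // filter_uniq // uniq_Off.
move=> z /mapP [x xU ->]; rewrite mem_undup; apply: map_f.
by move: xU; rewrite mem_filter => /andP [].
Qed.
Arguments Ple : simpl never.
Arguments Off : simpl never.

Lemma key (a : nat -> nat) :
  (size (undup (map (sv a) Ple)) <= 19)%N \/ (22 <= size (undup (map (dv a) Off)))%N.
Proof.
case: (classic (exists P Q R S, [/\ P \in Ple, Q \in Ple, R \in Ple, S \in Ple &
   [/\ P != Q, R != S, sv a P = sv a Q, sv a R = sv a S &
       ~ (P = R /\ Q = S) /\ ~ (P = S /\ Q = R)]])).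
  move=> [P [Q [R [S [PP QP RP SP [PQ RS e1 e2 [n1 n2]]]]]]]; left.
  have := two_coll uniq_Ple PP QP RP SP PQ RS e1 e2 n1 n2.
  by rewrite size_Ple.
move=> Hn; right.
case: (classic (exists P Q, [/\ P \in Ple, Q \in Ple, P != Q & sv a P = sv a Q])).
  move=> [P0 [Q0 [P0P Q0P PQ0 e0]]].
  apply: (keyB (P0 := P0) (Q0 := Q0)) => R S RP SP RS e.
  apply: NNPP => hn; apply: Hn; exists P0, Q0, R, S; split => //; split => //.
  split => -[hh1 hh2]; apply: hn; tauto.
move=> Hn2.
apply: (keyB (P0 := (0,0)) (Q0 := (0,0))) => R S RP SP RS e.
by case: Hn2; exists R, S.
Qed.

End Aux.
Import Aux.

Section Aux2.
Local Open Scope fset_scope.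
Lemma memA (A : {fset nat}) y : y \in A ->
  exists2 i, (i < size (enum_fset A))%N & y = nth 0%N (enum_fset A) i.
Proof.
move=> yA; have yA' : y \in enum_fset A by [].
by exists (index y (enum_fset A)); rewrite ?index_mem ?nth_index.
Qed.

Lemma nthA (A : {fset nat}) i : (i < size (enum_fset A))%N -> nth 0%N (enum_fset A) i \in A.
Proof. by move=> h; have : nth 0%N (enum_fset A) i \in enum_fset A by apply: mem_nth. Qed.

Lemma in_fseq (T : choiceType) (s : seq T) x : x \in s -> x \in [fset y in s].
Proof. by rewrite inE. Qed.

Lemma in_fseq_inv (T : choiceType) (s : seq T) x : x \in [fset y in s] -> x \in s.
Proof. by rewrite inE. Qed.

Lemma pos_bound (D : {fset int}) : (0 \in D)%R -> (forall d, d \in D -> - d \in D)%R ->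
  (2 * #|` [fset d in D | (0 < d)%R]| + 1 <= #|` D|)%N.
Proof.
move=> D0 Dn.
set Pp := [fset d in D | (0 < d)%R].
set Nn := [fset (- d)%R | d in Pp].
have cN : #|` Nn| = #|` Pp| by rewrite card_imfset //; exact: oppr_inj.
have sub : Pp `|` Nn `|` [fset 0%R] `<=` D.
  apply/fsubsetP => z; rewrite !in_fsetU in_fset1 => /orP [/orP [] |].
  - by rewrite !inE => /andP [].
  - move=> /imfsetP [d /= dP ->]; apply: Dn; move: dP; rewrite !inE => /andP [] //.
  - by move/eqP ->.
have dPN : Pp `&` Nn = fset0.
  apply/fsetP => z; rewrite in_fsetI inE.
  apply/negbTE/negP => /andP [zP /imfsetP [d /= dP ez]].
  move: zP dP; rewrite !inE ez => /andP [_ h1] /andP [_ h2].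
  by move: h1; rewrite oppr_gt0 ltNge (ltW h2).
have d0 : (Pp `|` Nn) `&` [fset 0%R] = fset0.
  apply/fsetP => z; rewrite in_fsetI inE in_fset1.
  apply/negbTE/negP => /andP [zP /eqP ez]; subst z.
  move: zP => /orP [].
    by rewrite !inE ltxx andbF.
  move=> /imfsetP [d /= dP ez]; move: dP; rewrite !inE => /andP [_ h].
  by move: ez h => /eqP; rewrite eq_sym oppr_eq0 => /eqP ->; rewrite ltxx.
have := fsubset_leq_card sub.
have := cardfsUI (Pp `|` Nn) [fset 0%R]; rewrite d0 cardfs0 addn0 cardfs1 => ->.
have := cardfsUI Pp Nn; rewrite dPN cardfs0 addn0 cN => ->.
lia.
Qed.

End Aux2.

Theorem lemma5 (A : {fset nat}) :
  sum_dominant A -> #|` A| = 6 ->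
  (#|` [fset d in diffset A | (0 < d)%R]%fset| <= 8)%N.
Proof.
rewrite /sum_dominant => sd hA.
set a := fun i => nth 0%N (enum_fset A) i.
have memF : forall p, p \in Ple -> sv a p \in [fset x in map (sv a) Ple]%fset.
  by move=> p hp; apply: in_fseq; apply: map_f.
have hS : (#|` sumset A| <= size (undup (map (sv a) Ple)))%N.
  rewrite -card_fseq; apply: fsubset_leq_card; apply/fsubsetP => z.
  move=> /imfset2P [x xA [y yA ->]].
  have [i hi ->] := memA _ _ xA; have [j hj ->] := memA _ _ yA.
  rewrite hA in hi hj.
  case: (leqP i j) => hij.
    by apply: (memF (i, j)); apply: mem_Ple.
  rewrite addnC; apply: (memF (j, i)); apply: mem_Ple => //; lia.
have hD : (size (undup (map (dv a) Off)) <= #|` diffset A|)%N.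
  rewrite -card_fseq; apply: fsubset_leq_card; apply/fsubsetP => z.
  move/in_fseq_inv => /mapP [[i j] /Off_mem [hi hj _] ->] /=.
  apply/imfset2P; exists (a i); first by apply: nthA; rewrite hA.
  by exists (a j); first by apply: nthA; rewrite hA.
have D0 : (0 \in diffset A)%R.
  apply/imfset2P; exists (a 0%N); first by apply: nthA; rewrite hA.
  by exists (a 0%N); [apply: nthA; rewrite hA | rewrite subrr].
have Dn : (forall d, d \in diffset A -> - d \in diffset A)%R.
  move=> d /imfset2P [x xA [y yA ->]]; apply/imfset2P; exists y => //.
  by exists x => //; rewrite opprB.
have pb := pos_bound _ D0 Dn.
have s21 : (size (undup (map (sv a) Ple)) <= 21)%N.
  by rewrite -size_Ple -(size_map (sv a)) size_undup.
case: (key a) => h; lia.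
Qed.
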